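(* Let $X$, $Y$ be metrizable spaces with $Y$ separable. For every nonzero countable ordinal $\xi$, if there is a sequence of $\mathbf{\Delta}^0_\xi$-functions from $X$ to $Y$ converging pointwise to $f:X\to Y$, then $f$ is of Baire class $\xi$. Conversely, if $\xi>1$ and $f: X\to Y$ is of Baire class $\xi$, then there is a sequence of $\mathbf{\Delta}^0_\xi$-functions from $X$ to $Y$ converging pointwise to $f$.
   Context: Work in ZF plus countable choice over the reals. For metrizable $X,Y$: $f:X\to Y$ is of Baire class $1$ if $f^{-1}(U)\in\mathbf{\Sigma}^0_2(X)$ for every open $U\subseteq Y$; for $1<\xi<\omega_1$, $f$ is of Baire class $\xi$ if it is the pointwise limit of a sequence of functions $f_n:X\to Y$ each of Baire class $\xi_n$ for some $1\le\xi_n<\xi$. For a nonzero countable ordinal $\eta$, $g:X\to Y$ is a $\mathbf{\Delta}^0_\eta$-function if $g^{-1}(A)\in\mathbf{\Sigma}^0_\eta(X)$ for every $A\in\mathbf{\Sigma}^0_\eta(Y)$. *)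

(* Defs.v *)
From HB Require Import structures.
From mathcomp Require Import all_boot all_order all_algebra.
From mathcomp Require Import all_classical all_reals all_analysis.

Set Implicit Arguments.
Unset Strict Implicit.
Unset Printing Implicit Defensive.

Import Order.TTheory GRing.Theory Num.Theory.

Local Open Scope classical_set_scope.

(** * Countable ordinals as Brouwer trees.
    [OZ] denotes 0, [OS a] denotes a+1 and [OL f] denotes sup_n (f n).
    Every countable ordinal is denoted by some tree (possibly many).       *)
Inductive cord : Type :=
| OZ : cord
| OS : cord -> cord
| OL : (nat -> cord) -> cord.

Inductive cord_le : cord -> cord -> Prop :=
| cord_le_Z b : cord_le OZ b
| cord_le_SS a b : cord_le a b -> cord_le (OS a) (OS b)
| cord_le_S a b : cord_le a b -> cord_le a (OS b)
| cord_le_Lr a f n : cord_le a (f n) -> cord_le a (OL f)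
| cord_le_Ll f b : (forall n, cord_le (f n) b) -> cord_le (OL f) b.

Definition cord_lt (a b : cord) : Prop := cord_le (OS a) b.

Definition cord1 : cord := OS OZ.

(** Sigma^0_1 = open sets; for xi > 1, Sigma^0_xi consists of the countable
    unions of sets whose complements are in Sigma^0_(xi_n), 1 <= xi_n < xi.
    (Open sets are kept in every Sigma^0_xi, xi >= 1: for metrizable spaces
    this agrees with the usual definition, since open sets are F_sigma.)   *)
Inductive Sigma0 {T : topologicalType} : cord -> set T -> Prop :=
| Sigma0_open xi A : cord_le cord1 xi -> open A -> Sigma0 xi A
| Sigma0_union xi (A : nat -> set T) (eta : nat -> cord) :
    (forall n, cord_le cord1 (eta n)) ->
    (forall n, cord_lt (eta n) xi) ->
    (forall n, Sigma0 (eta n) (~` A n)) ->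
    Sigma0 xi (\bigcup_n A n).

Definition pointwise_cvg {X Y : topologicalType} (g : nat -> X -> Y)
  (f : X -> Y) : Prop :=
  forall x, (fun n => g n x) @ \oo --> f x.

Inductive BaireClass {X Y : topologicalType} : cord -> (X -> Y) -> Prop :=
| Baire1 xi (f : X -> Y) :
    cord_le xi cord1 -> cord_le cord1 xi ->
    (forall U : set Y, open U -> Sigma0 (OS cord1) (f @^-1` U)) ->
    BaireClass xi f
| BaireLim xi (f : X -> Y) (g : nat -> X -> Y) (eta : nat -> cord) :
    cord_lt cord1 xi ->
    (forall n, cord_le cord1 (eta n)) ->
    (forall n, cord_lt (eta n) xi) ->
    (forall n, BaireClass (eta n) (g n)) ->
    pointwise_cvg g f ->
    BaireClass xi f.

Definition Delta0_fun {X Y : topologicalType} (eta : cord) (g : X -> Y) : Prop :=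
  forall A : set Y, Sigma0 eta A -> Sigma0 eta (g @^-1` A).

Definition separable_space (T : topologicalType) : Prop :=
  exists D : set T, countable D /\ dense D.

(* Main.v *)
Require Import Defs.
From HB Require Import structures.
From mathcomp Require Import all_boot all_order all_algebra.
From mathcomp Require Import all_classical all_reals all_analysis.
From mathcomp Require Import lra.
Import Order.TTheory GRing.Theory Num.Theory.
Local Open Scope classical_set_scope.
Set Implicit Arguments. Unset Strict Implicit.
Lemma cle_refl a : cord_le a a.
Proof.
elim: a => [|a IH|f IH]; first exact: cord_le_Z.
- exact: cord_le_SS.
- apply: cord_le_Ll => n; exact: (cord_le_Lr (IH n)).
Qed.

Lemma cle_S a : cord_le a (OS a).
Proof. apply: cord_le_S; exact: cle_refl. Qed.

Lemma cle_OSl a c : cord_le (OS a) c -> cord_le a c.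
Proof.
move=> H; remember (OS a) as b0 eqn:Hb; elim: H a Hb.
- by [].
- move=> a0 b Hab _ a [<-]; exact: cord_le_S Hab.
- move=> a0 b _ IH a Hb; apply: cord_le_S; exact: IH.
- move=> a0 f n _ IH a Hb; apply: (cord_le_Lr (n:=n)); exact: IH.
- by [].
Qed.

Lemma cle_OLl f n c : cord_le (OL f) c -> cord_le (f n) c.
Proof.
move=> H; remember (OL f) as b0 eqn:Hb; elim: H f Hb.
- by [].
- by [].
- move=> a b _ IH f Hb; apply: cord_le_S; exact: IH.
- move=> a g m _ IH f Hb; apply: (cord_le_Lr (n:=m)); exact: IH.
- move=> g b H _ f [<-]; exact: H.
Qed.

Lemma cle_trans a b c : cord_le a b -> cord_le b c -> cord_le a c.
Proof.
move=> H; elim: H c => {a b}.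
- move=> b c _; exact: cord_le_Z.
- move=> a b _ IH c Hc.
  remember (OS b) as b' eqn:Hb; elim: Hc b Hb IH.
  + by [].
  + move=> a0 b0 H0 _ b [<-] IH; apply: cord_le_SS; exact: IH H0.
  + move=> a0 b0 _ IH0 b Hb IH; apply: cord_le_S; exact: IH0 b Hb IH.
  + move=> a0 f n _ IH0 b Hb IH; apply: (cord_le_Lr (n:=n)); exact: IH0 b Hb IH.
  + by [].
- move=> a b _ IH c Hc; apply: IH; exact: cle_OSl.
- move=> a f n _ IH c Hc; apply: IH; exact: cle_OLl Hc.
- move=> f b _ IH c Hc; apply: cord_le_Ll => n; exact: IH.
Qed.

Lemma cle_OS_inv a b : cord_le (OS a) (OS b) -> cord_le a b.
Proof.
move=> H; inversion H; subst => //.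
exact: cle_OSl.
Qed.

Lemma cle_OS_OZ a : ~ cord_le (OS a) OZ.
Proof. by move=> H; inversion H. Qed.

Lemma clt_le a b : cord_lt a b -> cord_le a b.
Proof. exact: cle_OSl. Qed.

Lemma clt_le_trans a b c : cord_lt a b -> cord_le b c -> cord_lt a c.
Proof. exact: cle_trans. Qed.

Lemma cle_lt_trans a b c : cord_le a b -> cord_lt b c -> cord_lt a c.
Proof. move=> H1 H2; apply: cle_trans H2; exact: cord_le_SS. Qed.

Lemma cle_OLr_inv a f : cord_le (OS a) (OL f) -> exists n, cord_le (OS a) (f n).
Proof. by move=> H; inversion H; subst; exists n. Qed.

Lemma cord_total a b : cord_le a b \/ cord_lt b a.
Proof.
elim: a b => [|a IHa|g IHg] b.
- left; exact: cord_le_Z.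
- elim: b => [|b IHb|h IHh].
  + right; apply: cord_le_SS; exact: cord_le_Z.
  + case: IHb => [H|H].
    * left; exact: cord_le_S.
    * have Hb : cord_le b a := cle_OS_inv H.
      case: (IHa b) => [H2|H2].
      -- left; exact: cord_le_SS.
      -- right; exact: cord_le_SS.
  + case: (pselect (exists n, cord_le (OS a) (h n))) => [[n Hn]|Hn].
    * left; exact: (cord_le_Lr (n:=n)).
    * right; apply: cord_le_SS; apply: cord_le_Ll => n.
      case: (IHh n) => [H|H]; first by exfalso; apply: Hn; exists n.
      exact: cle_OS_inv.
- case: (pselect (forall n, cord_le (g n) b)) => [H|H].
  + left; exact: cord_le_Ll.
  + right; have [n Hn] : exists n, ~ cord_le (g n) b.
      by apply: contrapT => C; apply: H => n; apply: contrapT => C2; apply: C; exists n.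
    case: (IHg n b) => [//|H2]; exact: (cord_le_Lr (n:=n)).
Qed.

Lemma clt_wf : well_founded cord_lt.
Proof.
have key : forall a c, cord_le c a -> Acc cord_lt c.
  elim=> [|a IH|f IH] c Hc; constructor => d Hd.
  - by exfalso; apply: (@cle_OS_OZ d); apply: cle_trans Hd Hc.
  - apply: IH; apply: cle_OS_inv; exact: cle_trans Hd Hc.
  - have [n Hn] := cle_OLr_inv (cle_trans Hd Hc).
    apply: (IH n); exact: cle_OSl.
move=> a; apply: (key a); exact: cle_refl.
Qed.

Lemma cord_max a b c : cord_lt a c -> cord_lt b c ->
  exists d, cord_le a d /\ cord_le b d /\ cord_lt d c.
Proof.
move=> Ha Hb; case: (cord_total a b) => H.
- by exists b; split=> //; split=> //; exact: cle_refl.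
- exists a; split; first exact: cle_refl; split=> //; exact: clt_le.
Qed.

Lemma not_lt1 e : cord_le cord1 e -> cord_lt e cord1 -> False.
Proof.
move=> H1 H2; have := cle_OS_inv (cle_trans (cord_le_SS H1) H2).
exact: cle_OS_OZ.
Qed.
Section SigmaGen.
Variable T : topologicalType.

Definition lowerSig (xi : cord) (E : set T) :=
  exists eta, cord_le cord1 eta /\ cord_lt eta xi /\ Sigma0 eta E.

Lemma Sigma0_ge1 xi (A : set T) : Sigma0 xi A -> cord_le cord1 xi.
Proof.
case=> // {}xi B eta H1 H2 _; apply: cle_trans (H1 0%N) _; exact: clt_le.
Qed.

Lemma Sigma0_mono a b (A : set T) : cord_le a b -> Sigma0 a A -> Sigma0 b A.
Proof.
move=> Hab H; case: H Hab => {A a}.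
- move=> xi A H1 HA Hab; apply: Sigma0_open => //; exact: cle_trans Hab.
- move=> xi B eta H1 H2 H3 Hab; apply: (Sigma0_union (eta:=eta)) => // n.
  exact: clt_le_trans Hab.
Qed.

Lemma Sigma0_form xi (A : set T) : Sigma0 xi A ->
  open A \/ exists B : nat -> set T, A = \bigcup_n B n /\ forall n, lowerSig xi (~` B n).
Proof.
case=> {A}; first by move=> ? A _ ?; left.
move=> {}xi B eta H1 H2 H3; right; exists B; split=> // n; exists (eta n); split=> //.
Qed.

Lemma Sigma0_of_form xi (B : nat -> set T) : cord_le cord1 xi ->
  (forall n, lowerSig xi (~` B n)) -> Sigma0 xi (\bigcup_n B n).
Proof.
move=> H1 HB; have [eta Heta] := choice HB.
apply: (Sigma0_union (eta:=eta)) => n; by case: (Heta n) => [? [? ?]].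
Qed.

Lemma Sigma0_open_nlt xi (A : set T) : ~ cord_lt cord1 xi -> Sigma0 xi A -> open A.
Proof.
move=> Hn /Sigma0_form [//|[B [_ HB]]]; exfalso; apply: Hn.
case: (HB 0%N) => e [He1 [He2 _]]; exact: cle_lt_trans He2.
Qed.

Lemma lowerSig_Sigma xi (E : set T) : lowerSig xi E -> Sigma0 xi E.
Proof. case=> e [_ [He H]]; exact: Sigma0_mono (clt_le He) H. Qed.

Lemma lowerSig_SigmaC xi (E : set T) : lowerSig xi E -> Sigma0 xi (~` E).
Proof.
move=> H; have -> : ~` E = \bigcup_(n : nat) ~` E.
  by apply/seteqP; split=> x; [move=> Hx; exists 0%N | case].
apply: Sigma0_of_form; last by move=> _; rewrite setCK.
case: H => e [H1 [H2 _]]; apply: cle_trans H1 _; exact: clt_le.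
Qed.

Definition dec2 (p : nat) : nat * nat := odflt (0%N, 0%N) (unpickle p).
Lemma dec2K q : dec2 (pickle q) = q.
Proof. by rewrite /dec2 pickleK. Qed.

Lemma bigcup_dec2 (B : nat -> nat -> set T) :
  \bigcup_n \bigcup_m B n m = \bigcup_p B (dec2 p).1 (dec2 p).2.
Proof.
apply/seteqP; split=> x.
- case=> n _ [m _ H]; exists (pickle (n, m)) => //; by rewrite dec2K.
- case=> p _ H; exists (dec2 p).1 => //; by exists (dec2 p).2.
Qed.

End SigmaGen.
Section Met.
Variables (R : realType).
Local Open Scope ring_scope.
Definition rr (n : nat) : R := (n.+1%:R)^-1.

Lemma rr_gt0 n : 0 < rr n.
Proof. by rewrite /rr invr_gt0 ltr0n. Qed.

Lemma rr_small (e : R) : 0 < e -> exists n, rr n < e.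
Proof.
move=> e0; case: (near_infty_natSinv_lt (PosNum e0)) => N _ HN.
by exists N; apply: HN => /=.
Qed.

Lemma rr_le m n : (m <= n)%N -> rr n <= rr m.
Proof. by move=> H; rewrite /rr lef_pV2 ?posrE ?ltr0n // ler_nat ltnS. Qed.

Variable T : metricType R.

Lemma mball_open (x : T) r : open (ball x r).
Proof.
rewrite openE => y Hy; apply/nbhs_ballP.
move: Hy; rewrite ballEmdist /= => Hy.
exists ((r - mdist x y) / 2); first by rewrite /= divr_gt0 // subr_gt0.
move=> z; rewrite /= !ballEmdist /= => Hz.
have := metric_triangle x y z; have := mdist_ge0 x y; have := mdist_ge0 y z.
move: Hy Hz; lra.
Qed.

Lemma open_ball_sub (A : set T) x : open A -> A x -> exists2 e, 0 < e & ball x e `<=` A.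
Proof.
move=> oA Ax; have : nbhs x A by by apply: open_nbhs_nbhs; split.
by move/nbhs_ballP => [e e0 H]; exists e.
Qed.

Lemma open_Fsigma (A : set T) : open A ->
  exists C : nat -> set T, A = \bigcup_n C n /\ forall n, open (~` C n).
Proof.
move=> oA; exists (fun n => [set x | ball x (rr n) `<=` A]); split.
- apply/seteqP; split=> x.
  + move=> Ax; have [e e0 He] := open_ball_sub oA Ax.
    have [n Hn] := rr_small e0; exists n => //= z Hz; apply: He.
    exact: le_ball (ltW Hn) _ Hz.
  + case=> n _ /= H; apply: H; exact: ballxx (rr_gt0 n).
- move=> n; have -> : ~` [set x | ball x (rr n) `<=` A] =
      \bigcup_(z in ~` A) ball z (rr n).
    apply/seteqP; split=> x /=.
    + move=> H; have [z [Hz nAz]] : exists z, ball x (rr n) z /\ ~ A z.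
        by apply: contrapT => C; apply: H => z Hz; apply: contrapT => nz; apply: C; exists z.
      by exists z => //; exact: ball_sym.
    + case=> z nAz Hz H; apply: nAz; apply: H; exact: ball_sym.
  apply: bigcup_open => z _; exact: mball_open.
Qed.

Lemma closed_Gdelta (A : set T) : open (~` A) ->
  exists O : nat -> set T, A = \bigcap_n O n /\ forall n, open (O n).
Proof.
move=> oA; exists (fun n => \bigcup_(y in A) ball y (rr n)); split.
- apply/seteqP; split=> x.
  + move=> Ax n _; exists x => //; exact: ballxx (rr_gt0 n).
  + move=> H; apply: contrapT => nAx.
    have [e e0 He] := open_ball_sub oA nAx.
    have [n Hn] := rr_small e0; have [y Ay Hy] := H n I.
    apply: (He y) => //; apply: le_ball (ltW Hn) _ _; exact: ball_sym.
- move=> n; apply: bigcup_open => y _; exact: mball_open.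
Qed.

End Met.
Arguments rr {R} n.
Arguments rr_gt0 {R} n. Arguments rr_le {R} m n.

Section SigM.
Variables (R : realType) (T : metricType R).

Lemma Sigma0_formM xi (A : set T) : cord_lt cord1 xi -> Sigma0 xi A ->
  exists B : nat -> set T, A = \bigcup_n B n /\ forall n, lowerSig xi (~` B n).
Proof.
move=> Hlt /Sigma0_form [oA|//].
have [C [-> HC]] := open_Fsigma oA; exists C; split=> // n.
exists cord1; split; first exact: cle_refl; split=> //.
apply: Sigma0_open => //; exact: cle_refl.
Qed.

Lemma Sigma0_bigcup xi (A : nat -> set T) : cord_le cord1 xi ->
  (forall n, Sigma0 xi (A n)) -> Sigma0 xi (\bigcup_n A n).
Proof.
move=> H1 HA; case: (pselect (cord_lt cord1 xi)) => Hlt; last first.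
  apply: Sigma0_open => //; apply: bigcup_open => n _.
  exact: Sigma0_open_nlt (HA n).
have [B HB] := choice (fun n => Sigma0_formM Hlt (HA n)).
have -> : \bigcup_n A n = \bigcup_n \bigcup_m B n m.
  by apply/seteqP; split=> x [n _ Hn]; exists n => //; move: Hn; case: (HB n) => <-.
rewrite bigcup_dec2; apply: Sigma0_of_form => // p; by case: (HB (dec2 p).1).
Qed.

Lemma Sigma0_setU xi (A A' : set T) : Sigma0 xi A -> Sigma0 xi A' -> Sigma0 xi (A `|` A').
Proof.
move=> HA HA'; have -> : A `|` A' = \bigcup_n (if n == 0%N then A else A').
  apply/seteqP; split=> x.
  - by case=> H; [exists 0%N | exists 1%N].
  - by case=> -[|n] _ /= H; [left | right].
apply: Sigma0_bigcup; first exact: Sigma0_ge1 HA.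
by case.
Qed.

Lemma Sigma0_setI xi (A A' : set T) : Sigma0 xi A -> Sigma0 xi A' -> Sigma0 xi (A `&` A').
Proof.
move=> HA HA'; have H1 := Sigma0_ge1 HA.
case: (pselect (cord_lt cord1 xi)) => Hlt; last first.
  apply: Sigma0_open => //; apply: openI; [exact: Sigma0_open_nlt HA | exact: Sigma0_open_nlt HA'].
have [B [-> HB]] := Sigma0_formM Hlt HA.
have [B' [-> HB']] := Sigma0_formM Hlt HA'.
have -> : \bigcup_n B n `&` \bigcup_n B' n =
    \bigcup_p (B (dec2 p).1 `&` B' (dec2 p).2).
  apply/seteqP; split=> x.
  - case=> -[n _ Hn] [m _ Hm]; exists (pickle (n, m)) => //; by rewrite dec2K.
  - case=> p _ [H H']; split; [exists (dec2 p).1 | exists (dec2 p).2] => //.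
apply: Sigma0_of_form => // p.
case: (HB (dec2 p).1) => e [e1 [e2 He]]; case: (HB' (dec2 p).2) => e' [e1' [e2' He']].
have [d [Hd [Hd' Hdx]]] := cord_max e2 e2'.
exists d; split; first exact: cle_trans Hd.
split=> //; rewrite setCI; apply: Sigma0_setU; [exact: Sigma0_mono Hd He | exact: Sigma0_mono Hd' He'].
Qed.

Lemma Sigma0_setT xi : cord_le cord1 xi -> Sigma0 xi (@setT T).
Proof. by move=> H; apply: Sigma0_open => //; exact: openT. Qed.

Lemma Sigma0_set0 xi : cord_le cord1 xi -> Sigma0 xi (@set0 T).
Proof. by move=> H; apply: Sigma0_open => //; exact: open0. Qed.

Definition Delta xi (A : set T) := Sigma0 xi A /\ Sigma0 xi (~` A).

Lemma Delta_ite xi (E A B : set T) : Delta xi E -> Delta xi A -> Delta xi B ->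
  Delta xi ((E `&` A) `|` (~` E `&` B)).
Proof.
move=> [E1 E2] [A1 A2] [B1 B2]; split.
- apply: Sigma0_setU; exact: Sigma0_setI.
- have -> : ~` ((E `&` A) `|` (~` E `&` B)) = (E `&` ~` A) `|` (~` E `&` ~` B).
    apply/seteqP; split=> x /=.
    + move=> H; case: (pselect (E x)) => Ex; [left | right]; split=> // Hx; apply: H; by [left|right].
    + by case=> -[H1 H2] [] [].
  apply: Sigma0_setU; exact: Sigma0_setI.
Qed.

Lemma lowerSig_Delta xi (E : set T) : lowerSig xi E -> Delta xi E.
Proof. by move=> H; split; [exact: lowerSig_Sigma | exact: lowerSig_SigmaC]. Qed.

End SigM.

Section Lim.
Variables (R : realType).
Local Open Scope ring_scope.

Lemma open_notsub (Y : metricType R) (U : set Y) r :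
  open (~` [set y | ball y r `<=` U]).
Proof.
have -> : ~` [set y | ball y r `<=` U] = \bigcup_(z in ~` U) ball z r.
  apply/seteqP; split=> x /=.
  + move=> H; have [z [Hz nAz]] : exists z, ball x r z /\ ~ U z.
      by apply: contrapT => C; apply: H => z Hz; apply: contrapT => nz; apply: C; exists z.
    by exists z => //; exact: ball_sym.
  + case=> z nAz Hz H; apply: nAz; apply: H; exact: ball_sym.
apply: bigcup_open => z _; exact: mball_open.
Qed.


Lemma eventually_ball (Y : metricType R) (u : nat -> Y) y e :
  u @ \oo --> y -> 0 < e -> exists N, forall n, (N <= n)%N -> ball y e (u n).
Proof.
move=> Hu e0; move/cvg_ballP: Hu => /(_ _ e0) [N _ HN].
by exists N => n Hn; apply: HN.
Qed.

Lemma limit_meas (X Y : metricType R) xi (g : nat -> X -> Y) (f : X -> Y) :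
  cord_le cord1 xi -> (forall n V, open V -> Sigma0 xi (g n @^-1` V)) ->
  pointwise_cvg g f -> forall U, open U -> Sigma0 (OS xi) (f @^-1` U).
Proof.
move=> H1 Hg Hcv U oU.
pose F k := [set y : Y | ball y (rr k) `<=` U].
pose P k m := [set x : X | forall n, F k (g (n + m)%N x)].
have -> : f @^-1` U = \bigcup_k \bigcup_m P k m.
  apply/seteqP; split=> x.
  - move=> /= Ux; have [e e0 He] := open_ball_sub oU Ux.
    have [k Hk] := rr_small (divr_gt0 e0 (ltr0n R 2)).
    have [N HN] := eventually_ball (Hcv x) (rr_gt0 k).
    exists k => //; exists N => // n z Hz; apply: He.
    apply: (le_ball (e1 := rr k + rr k)); first by move: Hk; lra.
    apply: ball_triangle Hz; apply: HN; exact: leq_addl.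
  - case=> k _ [m _ Hm]; have [N HN] := eventually_ball (Hcv x) (rr_gt0 k).
    have := Hm N; rewrite /F /= => H; apply: H; apply: ball_sym; apply: HN.
    exact: leq_addr.
apply: Sigma0_bigcup; first exact: cle_trans H1 (cle_S xi).
move=> k; apply: Sigma0_of_form; first exact: cle_trans H1 (cle_S xi).
move=> m; exists xi; split=> //; split; first exact: cle_refl.
have -> : ~` P k m = \bigcup_n (g (n + m)%N @^-1` (~` F k)).
  apply/seteqP; split=> x /=.
  - move=> H; apply: contrapT => C; apply: H => n; apply: contrapT => Cn; apply: C.
    by exists n.
  - by case=> n _ Hn H; apply: Hn; apply: H.
apply: Sigma0_bigcup => // n; apply: Hg; exact: open_notsub.
Qed.

End Lim.

Section P4.
Variables (R : realType).

Lemma Baire_meas (X Y : metricType R) xi (f : X -> Y) : BaireClass xi f ->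
  cord_le cord1 xi /\ forall U, open U -> Sigma0 (OS xi) (f @^-1` U).
Proof.
elim=> {xi f}.
- move=> xi f Hx1 H1x Hf; split=> // U oU.
  exact: Sigma0_mono (cord_le_SS H1x) (Hf U oU).
- move=> xi f g eta Hlt He1 He2 Hg IH Hcv.
  have H1 : cord_le cord1 xi := clt_le Hlt.
  split=> //; apply: limit_meas Hcv => // n V oV.
  exact: Sigma0_mono (He2 n) ((IH n).2 V oV).
Qed.

Definition upd (b : nat -> bool) N v := fun t => if t == N then v else b t.

Lemma bits_meas (T : metricType R) (Yt : Type) a (E : nat -> set T) N
  (Phi : (nat -> bool) -> Yt) :
  cord_le cord1 a -> (forall t, (t < N)%N -> Delta a (E t)) ->
  (forall b b', (forall t, (t < N)%N -> b t = b' t) -> Phi b = Phi b') ->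
  forall S, Delta a [set x | S (Phi (fun t => `[< E t x >]))].
Proof.
move=> H1; elim: N Phi => [|N IH] Phi HE HPhi S.
- case: (pselect (S (Phi (fun _ => false)))) => HS.
  + have -> : [set x | S (Phi (fun t => `[< E t x >]))] = setT.
      apply/seteqP; split=> x //= _; by rewrite (HPhi _ (fun _ => false)).
    rewrite /Delta setCT; split; [exact: Sigma0_setT | exact: Sigma0_set0].
  + have -> : [set x | S (Phi (fun t => `[< E t x >]))] = set0.
      apply/seteqP; split=> x //=; by rewrite (HPhi _ (fun _ => false)).
    rewrite /Delta setC0; split; [exact: Sigma0_set0 | exact: Sigma0_setT].
- pose Phi1 b := Phi (upd b N true); pose Phi2 b := Phi (upd b N false).
  have Hd1 : forall b b', (forall t, (t < N)%N -> b t = b' t) -> Phi1 b = Phi1 b'.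
    move=> b b' Hb; apply: HPhi => t Ht; rewrite /upd; case: eqP => // /eqP Hn.
    apply: Hb; by rewrite ltn_neqAle Hn -ltnS.
  have Hd2 : forall b b', (forall t, (t < N)%N -> b t = b' t) -> Phi2 b = Phi2 b'.
    move=> b b' Hb; apply: HPhi => t Ht; rewrite /upd; case: eqP => // /eqP Hn.
    apply: Hb; by rewrite ltn_neqAle Hn -ltnS.
  have HE' : forall t, (t < N)%N -> Delta a (E t) by move=> t Ht; apply: HE; exact: ltnW.
  have -> : [set x | S (Phi (fun t => `[< E t x >]))] =
    (E N `&` [set x | S (Phi1 (fun t => `[< E t x >]))]) `|`
    (~` E N `&` [set x | S (Phi2 (fun t => `[< E t x >]))]).
    apply/seteqP; split=> x /=.
    + case: (pselect (E N x)) => Ex HS; [left | right]; split=> //.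
      * rewrite /Phi1 -(HPhi (fun t => `[< E t x >])) // => t _.
        rewrite /upd; case: eqP => // ->; by rewrite asboolT.
      * rewrite /Phi2 -(HPhi (fun t => `[< E t x >])) // => t _.
        rewrite /upd; case: eqP => // ->; by rewrite asboolF.
    + case=> -[Ex HS].
      * rewrite (HPhi _ (upd (fun t => `[< E t x >]) N true)) // => t _.
        rewrite /upd; case: eqP => // ->; by rewrite asboolT.
      * rewrite (HPhi _ (upd (fun t => `[< E t x >]) N false)) // => t _.
        rewrite /upd; case: eqP => // ->; by rewrite asboolF.
  apply: Delta_ite; [exact: HE | exact: IH | exact: IH].
Qed.

End P4.

Section Sel.
Variables (R : realType) (Y : metricType R) (y0 : Y) (pt : nat -> Y).
Local Open Scope ring_scope.

Definition cand (B : nat -> nat -> nat -> bool) n k p :=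
  (p <= n)%N /\ forall j, (j <= n)%N -> B k p j.
Definition hasc B n k := exists p, cand B n k p.
Definition cmin B n k :=
  xget 0%N [set p | cand B n k p /\ forall q, cand B n k q -> (p <= q)%N].
Definition okpre B n k := forall l, (l <= k)%N -> hasc B n l /\
  forall l', (l' <= k)%N -> ball (pt (cmin B n l)) (rr l + rr l') (pt (cmin B n l')).
Definition Kmax B n := xget 0%N [set k | (k <= n)%N /\ okpre B n k /\
  forall k', (k' <= n)%N -> okpre B n k' -> (k' <= k)%N].
Definition Phi0 B n := if pselect (exists k, (k <= n)%N /\ okpre B n k)
  then pt (cmin B n (Kmax B n)) else y0.

Lemma least_ex (P : nat -> Prop) : (exists p, P p) ->
  exists p, P p /\ forall q, P q -> (p <= q)%N.
Proof.
move=> H; have H' : exists p, `[< P p >] by case: H => p Hp; exists p; exact: asboolT.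
case: (ex_minnP H') => m /asboolP Pm Hm; exists m; split=> // q Pq.
by apply: Hm; apply: asboolT.
Qed.

Lemma greatest_ex (P : nat -> Prop) n : (exists k, (k <= n)%N /\ P k) ->
  exists k, ((k <= n)%N /\ P k) /\ forall k', (k' <= n)%N -> P k' -> (k' <= k)%N.
Proof.
move=> H; have H' : exists k, `[< (k <= n)%N /\ P k >].
  by case: H => k Hk; exists k; exact: asboolT.
have ub : forall i, `[< (i <= n)%N /\ P i >] -> (i <= n)%N by move=> i /asboolP [].
case: (ex_maxnP H' ub) => m /asboolP Pm Hm; exists m; split=> // k' Hk' Pk'.
by apply: Hm; apply: asboolT.
Qed.

Lemma cmin_spec B n k : hasc B n k ->
  cand B n k (cmin B n k) /\ forall q, cand B n k q -> (cmin B n k <= q)%N.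
Proof. move=> H; exact: (xgetPex 0%N (least_ex H)). Qed.

Lemma Kmax_spec B n : (exists k, (k <= n)%N /\ okpre B n k) ->
  ((Kmax B n <= n)%N /\ okpre B n (Kmax B n)) /\
  forall k', (k' <= n)%N -> okpre B n k' -> (k' <= Kmax B n)%N.
Proof.
move=> H; have [k Hk] := greatest_ex H.
have : exists k, [set k | (k <= n)%N /\ okpre B n k /\
  forall k', (k' <= n)%N -> okpre B n k' -> (k' <= k)%N] k.
  by exists k; case: Hk => -[? ?] ?.
by move/(xgetPex 0%N) => [? [? ?]].
Qed.

Lemma finite_bound (Q : nat -> nat -> Prop) P :
  (forall q, (q < P)%N -> exists j, Q q j) ->
  exists J, forall q, (q < P)%N -> exists2 j, (j <= J)%N & Q q j.
Proof.
elim: P => [|P IH] H; first by exists 0%N.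
have [J HJ] : exists J, forall q, (q < P)%N -> exists2 j, (j <= J)%N & Q q j.
  by apply: IH => q Hq; apply: H; exact: ltnW.
have [j0 Hj0] := H P (ltnSn P).
exists (maxn J j0) => q; rewrite ltnS leq_eqVlt => /orP [/eqP ->|Hq].
- by exists j0 => //; exact: leq_maxr.
- have [j Hj Qj] := HJ q Hq; exists j => //; exact: leq_trans Hj (leq_maxl _ _).
Qed.

Variables (y : Y) (B : nat -> nat -> nat -> bool) (Bn : nat -> nat -> nat -> nat -> bool)
  (Tr : nat -> nat -> Prop).
Hypothesis hBn : forall n k p j, (k <= n)%N -> (p <= n)%N -> (j <= n)%N ->
  Bn n k p j = B k p j.
Hypothesis hT : forall k p, Tr k p <-> forall j, B k p j.
Hypothesis hball : forall k p, Tr k p -> ball (pt p) (rr k) y.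
Hypothesis hex : forall k, exists p, Tr k p.

Lemma sel_cvg : (fun n => Phi0 (Bn n) n) @ \oo --> y.
Proof.
have [ps Hps] := choice (fun k => least_ex (hex k)).
have step2 : forall k, exists N, (k <= N)%N /\ forall n, (N <= n)%N ->
    hasc (Bn n) n k /\ cmin (Bn n) n k = ps k.
  move=> k; case: (Hps k) => Tk Hmin.
  have [J HJ] : exists J, forall q, (q < ps k)%N -> exists2 j, (j <= J)%N & ~ B k q j.
    apply: finite_bound => q Hq; apply: contrapT => C.
    have : Tr k q.
      apply/hT => j; apply: contrapT => Cj; apply: C; by exists j.
    move/Hmin; by rewrite leqNgt Hq.
  exists (maxn (maxn (ps k) J) k); split; first exact: leq_maxr.
  move=> n Hn.
  have Hkn : (k <= n)%N := leq_trans (leq_maxr _ _) Hn.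
  have Hpn : (ps k <= n)%N := leq_trans (leq_maxl _ _) (leq_trans (leq_maxl _ _) Hn).
  have HJn : (J <= n)%N := leq_trans (leq_maxr _ _) (leq_trans (leq_maxl _ _) Hn).
  have Hc : cand (Bn n) n k (ps k).
    split=> // j Hj; rewrite hBn //; by move/hT: Tk.
  have Hnc : forall q, (q < ps k)%N -> ~ cand (Bn n) n k q.
    move=> q Hq [_ Hcq]; have [j Hj nB] := HJ q Hq; apply: nB.
    have Hjn : (j <= n)%N := leq_trans Hj HJn.
    have := Hcq j Hjn; rewrite hBn //; exact: ltnW (leq_trans Hq Hpn).
  have Hh : hasc (Bn n) n k by exists (ps k).
  split=> //; have [Hc1 Hc2] := cmin_spec Hh.
  apply/eqP; rewrite eqn_leq Hc2 //=; rewrite leqNgt; apply/negP => Hlt.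
  exact: Hnc Hlt Hc1.
have step3 : forall L, exists N, (L <= N)%N /\ forall n, (N <= n)%N ->
    forall l, (l <= L)%N -> hasc (Bn n) n l /\ cmin (Bn n) n l = ps l.
  elim=> [|L [N [HLN HN]]].
  - have [N [_ HN]] := step2 0%N; exists N; split=> // n Hn l; rewrite leqn0 => /eqP ->.
    exact: HN.
  - have [N' [HL' HN']] := step2 L.+1; exists (maxn N N'); split.
      exact: leq_trans HL' (leq_maxr _ _).
    move=> n Hn l; rewrite leq_eqVlt => /orP [/eqP ->|Hl].
    + apply: HN'; exact: leq_trans (leq_maxr _ _) Hn.
    + apply: HN; [exact: leq_trans (leq_maxl _ _) Hn | by rewrite -ltnS].
have pairball : forall l l', ball (pt (ps l)) (rr l + rr l') (pt (ps l')).
  move=> l l'; apply: ball_triangle (hball (Hps l).1) _.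
  apply: ball_sym; exact: hball (Hps l').1.
apply/cvg_ballP => e e0.
have [L HL] := rr_small (divr_gt0 e0 (ltr0n R 3)).
have [N [HLN HN]] := step3 L.
exists N => // n /= Hn.
have Hok : okpre (Bn n) n L.
  move=> l Hl; split; first exact: (HN n Hn l Hl).1.
  move=> l' Hl'; rewrite (HN n Hn l Hl).2 (HN n Hn l' Hl').2; exact: pairball.
have Hex : exists k, (k <= n)%N /\ okpre (Bn n) n k.
  by exists L; split=> //; exact: leq_trans HLN Hn.
rewrite /Phi0; case: (pselect _) => [Hpp|C]; last by exfalso; apply: C.
have [[HKn HKok] HKmax] := Kmax_spec Hex.
have HLK : (L <= Kmax (Bn n) n)%N by apply: HKmax => //; exact: leq_trans HLN Hn.
have := (HKok L HLK).2 _ (leqnn _).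
rewrite (HN n Hn L (leqnn L)).2 => Hb.
have Hy : ball y (rr L) (pt (ps L)) by apply: ball_sym; exact: hball (Hps L).1.
have H3 := ball_triangle Hy Hb.
have Hr := @rr_le R _ _ HLK.
apply: le_ball H3.
have Hr2 := @rr_gt0 R L; move: HL Hr Hr2; lra.
Qed.

End Sel.

Section P6.
Variables (R : realType).

Lemma dense_enum (Y : metricType R) (y0 : Y) : separable_space Y ->
  exists d : nat -> Y, forall y e, (0 < e)%R -> exists i, ball y e (d i).
Proof.
case=> D [cD dD]; have [h hinj] := countable_injP _ cD.
exists (fun i => xget y0 [set z | D z /\ h z = i]) => y e e0.
have [z [Bz Dz]] : (ball y e `&` D) !=set0.
  apply: dD; [by exists y; exact: ballxx | exact: mball_open].
exists (h z).
have [Dw Hw] : [set z0 | D z0 /\ h z0 = h z] (xget y0 [set z0 | D z0 /\ h z0 = h z]).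
  by apply: xgetPex; exists z.
have -> // : xget y0 [set z0 | D z0 /\ h z0 = h z] = z.
by apply: hinj => //; rewrite inE.
Qed.

Lemma decompS (T : metricType R) xi (S : set T) : cord_lt cord1 xi ->
  Sigma0 (OS xi) S -> exists E : nat -> nat -> set T,
  S = \bigcup_m \bigcap_j E m j /\ forall m j, lowerSig xi (E m j).
Proof.
move=> Hlt HS.
have H1 : cord_le cord1 xi := clt_le Hlt.
have [A [-> HA]] : exists A : nat -> set T, S = \bigcup_m A m /\ forall m, Sigma0 xi (~` A m).
  case: (Sigma0_form HS) => [oS|[B [-> HB]]].
  - have [C [-> HC]] := open_Fsigma oS; exists C; split=> // m.
    exact: Sigma0_open.
  - exists B; split=> // m; case: (HB m) => e [e1 [e2 He]].
    exact: Sigma0_mono (cle_OS_inv e2) He.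
have HE : forall m, exists E : nat -> set T, A m = \bigcap_j E j /\ forall j, lowerSig xi (E j).
  move=> m; have [B [HB1 HB2]] := Sigma0_formM Hlt (HA m).
  exists (fun j => ~` B j); split=> //.
  by rewrite -setC_bigcup -HB1 setCK.
have [E HE'] := choice HE; exists E; split; last by move=> m j; exact: (HE' m).2.
apply/seteqP; split=> x [m _ Hm]; exists m => //; move: Hm; by rewrite (HE' m).1.
Qed.

Lemma max_bound (h : nat -> nat -> nat -> nat) n : exists N, forall k p j,
  (k <= n)%N -> (p <= n)%N -> (j <= n)%N -> (h k p j < N)%N.
Proof.
exists (\max_(k < n.+1) \max_(p < n.+1) \max_(j < n.+1) h k p j).+1 => k p j Hk Hp Hj.
rewrite ltnS.
apply: leq_trans (leq_bigmax (Ordinal (Hk : (k < n.+1)%N))).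
apply: leq_trans (leq_bigmax (Ordinal (Hp : (p < n.+1)%N))).
exact: (leq_bigmax (Ordinal (Hj : (j < n.+1)%N))).
Qed.

Definition dec3 (t : nat) : nat * nat * nat := odflt (0%N, 0%N, 0%N) (unpickle t).
Definition restr n (B : nat -> nat -> nat -> bool) := fun k p j =>
  if [&& (k <= n)%N, (p <= n)%N & (j <= n)%N] then B k p j else false.

Lemma approx (X Y : metricType R) xi (f : X -> Y) : separable_space Y ->
  cord_lt cord1 xi -> (forall U, open U -> Sigma0 (OS xi) (f @^-1` U)) ->
  exists g : nat -> X -> Y, pointwise_cvg g f /\ forall n, exists eta,
    cord_le cord1 eta /\ cord_lt eta xi /\ forall S, Sigma0 (OS eta) (g n @^-1` S).
Proof.
move=> sepY Hlt Hf.
have H1 : cord_le cord1 xi := clt_le Hlt.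
case: (pselect (exists x0 : X, True)) => [[x0 _]|nX]; last first.
  exists (fun _ => f); split; first by move=> x; exfalso; apply: nX; exists x.
  move=> n; exists cord1; split; first exact: cle_refl; split=> // S.
  have -> : (fun _ : nat => f) n @^-1` S = set0.
    by apply/seteqP; split=> x //= _; apply: nX; exists x.
  apply: Sigma0_set0; exact: cle_S.
pose y0 := f x0.
have [d Hd] := dense_enum y0 sepY.
have HEk : forall k i, exists E : nat -> nat -> set X,
    f @^-1` ball (d i) (rr k) = \bigcup_m \bigcap_j E m j /\ forall m j, lowerSig xi (E m j).
  move=> k i; apply: decompS => //; apply: Hf; exact: mball_open.
have HEk2 : forall k, exists E : nat -> nat -> nat -> set X, forall i,
    f @^-1` ball (d i) (rr k) = \bigcup_m \bigcap_j E i m j /\ forall m j, lowerSig xi (E i m j).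
  by move=> k; have [e h] := choice (HEk k); exists e.
have [Ed HEd] := choice HEk2.
pose E' k p j := Ed k (dec2 p).1 (dec2 p).2 j.
pose Et t := E' (dec3 t).1.1 (dec3 t).1.2 (dec3 t).2.
pose pt p := d (dec2 p).1.
pose Bx x := fun k p j => `[< E' k p j x >].
pose g n x := Phi0 y0 pt (restr n (Bx x)) n.
exists g; split.
- move=> x; apply: (@sel_cvg R Y y0 pt (f x) (Bx x) (fun n => restr n (Bx x))
    (fun k p => forall j, E' k p j x)).
  + by move=> n k p j Hk Hp Hj; rewrite /restr Hk Hp Hj.
  + move=> k p; split=> H j; [exact: asboolT | exact: asboolW (H j)].
  + move=> k p Hkp.
    have : (f @^-1` ball (d (dec2 p).1) (rr k)) x.
      rewrite (HEd k (dec2 p).1).1; exists (dec2 p).2 => // j _; exact: Hkp.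
    by [].
  + move=> k; have [i Hi] := Hd (f x) _ (@rr_gt0 R k).
    have : (f @^-1` ball (d i) (rr k)) x by apply: ball_sym.
    rewrite (HEd k i).1 => -[m _ Hm]; exists (pickle (i, m)) => j.
    by rewrite /E' dec2K; apply: Hm.
- move=> n; have [N HN] := max_bound (fun k p j => pickle (k, p, j)) n.
  have [eta [He1 [He2 HeN]]] : exists eta, cord_le cord1 eta /\ cord_lt eta xi /\
      forall t, (t < N)%N -> Sigma0 eta (Et t).
    elim: (N) => [|M [eta [He1 [He2 HeM]]]].
    + by exists cord1; split; [exact: cle_refl|split].
    + have [z [Hz1 [Hz2 Hz]]] : lowerSig xi (Et M).
        rewrite /Et /E'; exact: ((HEd _ _).2).
      have [c [Hc1 [Hc2 Hc3]]] := cord_max He2 Hz2.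
      exists c; split; first exact: cle_trans He1 Hc1.
      split=> // t; rewrite ltnS leq_eqVlt => /orP [/eqP ->|Ht].
      * exact: Sigma0_mono Hc2 Hz.
      * exact: Sigma0_mono Hc1 (HeM t Ht).
  exists eta; split=> //; split=> // S.
  pose Phi (b : nat -> bool) := Phi0 y0 pt (restr n (fun k p j => b (pickle (k, p, j)))) n.
  have Hb : cord_le cord1 (OS eta) := cle_trans He1 (cle_S eta).
  have HD : forall t, (t < N)%N -> Delta (OS eta) (Et t).
    move=> t Ht; apply: lowerSig_Delta; exists eta; split=> //; split.
    + exact: cle_refl.
    + exact: HeN.
  have HPhi : forall b b', (forall t, (t < N)%N -> b t = b' t) -> Phi b = Phi b'.
    move=> b b' Hbb; rewrite /Phi; congr Phi0.
    apply/funext => k; apply/funext => p; apply/funext => j; rewrite /restr.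
    case: ifP => // /and3P [Hk Hp Hj]; exact: Hbb (HN _ _ _ Hk Hp Hj).
  have := (bits_meas (E:=Et) Hb HD HPhi S).1.
  congr Sigma0; apply/seteqP; split=> x /=.
  + congr S; rewrite /Phi /g; congr Phi0; congr restr.
    apply/funext => k; apply/funext => p; apply/funext => j.
    by rewrite /Et /dec3 pickleK.
  + congr S; rewrite /Phi /g; congr Phi0; congr restr.
    apply/funext => k; apply/funext => p; apply/funext => j.
    by rewrite /Et /dec3 pickleK.
Qed.

End P6.

Lemma LH (R : realType) (X Y : metricType R) : separable_space Y ->
  forall xi, cord_le cord1 xi -> forall f : X -> Y,
  (forall U, open U -> Sigma0 (OS xi) (f @^-1` U)) -> BaireClass xi f.
Proof.
move=> sepY xi; elim/(well_founded_induction clt_wf): xi => xi IH H1 f Hf.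
case: (cord_total xi cord1) => Hx.
- apply: Baire1 => // U oU; exact: Sigma0_mono (cord_le_SS Hx) (Hf U oU).
- have [g [Hcv Hg]] := approx sepY Hx Hf.
  have [eta Heta] := choice Hg.
  apply: (BaireLim (g:=g) (eta:=eta)) => //.
  + by move=> n; case: (Heta n).
  + by move=> n; case: (Heta n) => _ [].
  + move=> n; case: (Heta n) => He1 [He2 He3].
    apply: IH => // U _; exact: He3.
Qed.

Theorem mainTheorem6 (R : realType) (X Y : metricType R) :
  separable_space Y ->
  forall xi : cord, cord_le cord1 xi ->
  forall f : X -> Y,
    ((exists g : nat -> X -> Y,
        (forall n, Delta0_fun xi (g n)) /\ pointwise_cvg g f) ->
     BaireClass xi f) /\
    (cord_lt cord1 xi -> BaireClass xi f ->
     exists g : nat -> X -> Y,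
       (forall n, Delta0_fun xi (g n)) /\ pointwise_cvg g f).
Proof.
move=> sepY xi H1 f; split.
- case=> g [HD Hcv]; apply: LH => //; apply: limit_meas Hcv => // n V oV.
  apply: HD; exact: Sigma0_open.
- move=> Hlt HB; have [_ Hm] := Baire_meas HB.
  have [g [Hcv Hg]] := approx sepY Hlt Hm.
  exists g; split=> // n A _; have [eta [_ [He2 He3]]] := Hg n.
  exact: Sigma0_mono He2 (He3 A).
Qed.
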